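(* Let $c>0$. Then for all $0<t<\pi/2$, $$\frac{2\int_{-t}^{t}e^{c\sin b}\,db}{\int_{0}^{2\pi}e^{c\cos a}\,da}<\frac{2t}{\pi}.$$
   Context: In the paper $c=\rho rs/(1-\rho^2)$ with $0<\rho<1$, $r,s>0$. *)

(* Defs.v *)
From Stdlib Require Import Reals.
From Coquelicot Require Import Coquelicot.

(* Main.v *)
Require Import Defs.
From Stdlib Require Import Reals Lra Psatz.
From Coquelicot Require Import Coquelicot.
Open Scope R_scope.

Lemma exR (f : R -> R) a b : (forall x, continuous f x) -> ex_RInt f a b.
Proof. intros H; apply (ex_RInt_continuous (V:=R_CompleteNormedModule)); intros; apply H. Qed.

Lemma sub_lin (f : R -> R) u v a b : (forall x, continuous f x) ->
  RInt f (u*a+v) (u*b+v) = u * RInt (fun y => f (u*y+v)) a b.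
Proof.
  intros H. rewrite <- RInt_comp_lin by (apply exR; auto).
  rewrite RInt_scal. reflexivity.
  apply (ex_RInt_continuous (V:=R_CompleteNormedModule)); intros. apply (continuous_comp (U:=R_UniformSpace) (V:=R_UniformSpace) (W:=R_UniformSpace) (fun y => u*y+v) f).
  apply (ex_derive_continuous (K:=R_AbsRing) (V:=R_NormedModule)); auto_derive; auto. apply H.
Qed.

Lemma contS k x : continuous (fun y => exp (k * sin y)) x.
Proof. apply (ex_derive_continuous (K:=R_AbsRing) (V:=R_NormedModule)); auto_derive; auto. Qed.
Lemma contC k x : continuous (fun y => exp (k * cos y)) x.
Proof. apply (ex_derive_continuous (K:=R_AbsRing) (V:=R_NormedModule)); auto_derive; auto. Qed.

Lemma swap (f : R -> R) a b : (forall x, continuous f x) -> RInt f b a = - RInt f a b.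
Proof. intros H. rewrite <- (opp_RInt_swap f a b) by (apply exR; auto). reflexivity. Qed.

Lemma subst_neg (f : R -> R) v a b : (forall x, continuous f x) ->
  RInt f (v - b) (v - a) = RInt (fun y => f (v - y)) a b.
Proof.
  intros H. replace (v - b) with (-1*b+v) by ring. replace (v-a) with (-1*a+v) by ring.
  rewrite sub_lin by auto. rewrite (swap (fun y => f (-1*y+v))).
  - assert (Hz : forall z:R, -1 * - z = z) by (intro; ring). rewrite Hz.
    apply RInt_ext; intros; f_equal; ring.
  - intros x. apply (continuous_comp (U:=R_UniformSpace) (V:=R_UniformSpace) (W:=R_UniformSpace) (fun y => -1*y+v) f).
    apply (ex_derive_continuous (K:=R_AbsRing) (V:=R_NormedModule)); auto_derive; auto. apply H.
Qed.

Lemma subst_pos (f : R -> R) v a b : (forall x, continuous f x) ->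
  RInt f (a + v) (b + v) = RInt (fun y => f (y + v)) a b.
Proof.
  intros H. replace (a + v) with (1*a+v) by ring. replace (b+v) with (1*b+v) by ring.
  rewrite sub_lin by auto. rewrite Rmult_1_l. apply RInt_ext; intros; f_equal; ring.
Qed.

Lemma Hmono x y : x < y -> 0 < x + y -> exp x + exp (- x) < exp y + exp (- y).
Proof.
  intros H1 H2. rewrite !exp_Ropp.
  assert (A := exp_increasing _ _ H1).
  assert (B : 1 < exp x * exp y) by (rewrite <- exp_plus, <- exp_0; apply exp_increasing; lra).
  assert (Px := exp_pos x). assert (Py := exp_pos y).
  assert (E : exp y + / exp y - (exp x + / exp x) = (exp y - exp x) * (exp x * exp y - 1) / (exp x * exp y)) by (field; lra).
  assert (0 < (exp y - exp x) * (exp x * exp y - 1) / (exp x * exp y)).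
  { apply Rdiv_lt_0_compat; [apply Rmult_lt_0_compat|apply Rmult_lt_0_compat]; lra. }
  lra.
Qed.

Lemma Gmono c x y : 0 < c -> 0 <= x -> x < y -> y <= PI/2 ->
  exp (c * sin x) + exp (- c * sin x) < exp (c * sin y) + exp (- c * sin y).
Proof.
  intros Hc Hx Hxy Hy. assert (PI2 := PI_RGT_0).
  assert (S1 : sin x < sin y) by (apply sin_increasing_1; lra).
  assert (S0 : 0 <= sin x) by (apply sin_ge_0; lra).
  replace (- c * sin x) with (- (c * sin x)) by ring.
  replace (- c * sin y) with (- (c * sin y)) by ring.
  apply Hmono; nra.
Qed.

Lemma scalR (a b : R) : scal a b = a * b.
Proof. reflexivity. Qed.

Lemma RIntc (v a b : R) : RInt (fun _ => v) a b = (b - a) * v.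
Proof. rewrite RInt_const. reflexivity. Qed.

Lemma plusR (a b : R) : plus a b = a + b.
Proof. reflexivity. Qed.

Theorem lemma3p2 (c : R) (hc : 0 < c) :
  forall t : R, 0 < t < PI / 2 ->
    2 * RInt (fun b => exp (c * sin b)) (- t) t
      / RInt (fun a => exp (c * cos a)) 0 (2 * PI)
    < 2 * t / PI.
Proof.
  intros t [Ht0 Ht1]. assert (HPI := PI_RGT_0).
  set (G := fun y => exp (c * sin y) + exp (- c * sin y)).
  assert (cG : forall x, continuous G x).
  { intros x; unfold G. apply (ex_derive_continuous (K:=R_AbsRing) (V:=R_NormedModule)); auto_derive; auto. }
  assert (cS := contS). assert (cC := contC).
  assert (Gsum : forall a b, RInt (fun y => exp (c * sin y)) a b + RInt (fun y => exp (- c * sin y)) a b = RInt G a b).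
  { intros a b. unfold G. symmetry. apply (RInt_plus (V:=R_CompleteNormedModule)); apply exR; auto. }
  assert (HN : RInt (fun b => exp (c * sin b)) (- t) t = RInt G 0 t).
  { rewrite <- (RInt_Chasles _ (-t) 0 t) by (apply exR; auto). rewrite plusR.
    rewrite <- Gsum.
    transitivity (RInt (fun b => exp (c * sin b)) (0 - t) (0 - 0) + RInt (fun y => exp (c * sin y)) 0 t).
    { f_equal; f_equal; ring. }
    rewrite subst_neg by auto. rewrite Rplus_comm. f_equal.
    apply RInt_ext; intros. f_equal. replace (0 - x) with (- x) by ring. rewrite sin_neg. ring. }
  assert (HD : RInt (fun a => exp (c * cos a)) 0 (2 * PI) = 2 * RInt G 0 (PI/2)).
  { rewrite <- (RInt_Chasles _ 0 PI (2*PI)) by (apply exR; auto).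
    rewrite <- (RInt_Chasles _ 0 (PI/2) PI) by (apply exR; auto).
    rewrite <- (RInt_Chasles _ PI (PI + PI/2) (2*PI)) by (apply exR; auto).
    rewrite !plusR.
    assert (P1 : RInt (fun a => exp (c * cos a)) 0 (PI/2) = RInt (fun y => exp (c * sin y)) 0 (PI/2)).
    { transitivity (RInt (fun a => exp (c * cos a)) (PI/2 - PI/2) (PI/2 - 0)).
      { f_equal; ring. }
      rewrite subst_neg by auto. apply RInt_ext; intros. rewrite cos_shift. reflexivity. }
    assert (P2 : RInt (fun a => exp (c * cos a)) (PI/2) PI = RInt (fun y => exp (- c * sin y)) 0 (PI/2)).
    { transitivity (RInt (fun a => exp (c * cos a)) (0 + PI/2) (PI/2 + PI/2)).
      { f_equal; field. }
      rewrite subst_pos by auto. apply RInt_ext; intros. rewrite cos_plus, cos_PI2, sin_PI2. f_equal. ring. }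
    assert (P3 : RInt (fun a => exp (c * cos a)) PI (PI + PI/2) = RInt (fun y => exp (- c * sin y)) 0 (PI/2)).
    { transitivity (RInt (fun a => exp (c * cos a)) (PI + PI/2 - PI/2) (PI + PI/2 - 0)).
      { f_equal; field. }
      rewrite subst_neg by auto. apply RInt_ext; intros.
      replace (PI + PI / 2 - x) with ((PI/2 - x) + PI) by ring. rewrite neg_cos, cos_shift. f_equal. ring. }
    assert (P4 : RInt (fun a => exp (c * cos a)) (PI + PI/2) (2 * PI) = RInt (fun y => exp (c * sin y)) 0 (PI/2)).
    { transitivity (RInt (fun a => exp (c * cos a)) (0 + (PI/2 + PI)) (PI/2 + (PI/2 + PI))).
      { f_equal; field. }
      rewrite subst_pos by auto. apply RInt_ext; intros.
      replace (x + (PI / 2 + PI)) with ((x + PI/2) + PI) by ring. rewrite neg_cos, cos_plus, cos_PI2, sin_PI2. f_equal. ring. }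
    rewrite P1, P2, P3, P4, <- Gsum. assert (Hz : forall x y : R, x + y + (y + x) = 2*(x+y)) by (intros; ring). apply Hz. }
  rewrite HN, HD.
  rewrite <- (RInt_Chasles G 0 t (PI/2)) by (apply exR; auto).
  rewrite <- (RInt_Chasles G 0 (t/2) t) by (apply exR; auto).
  rewrite !plusR.
  set (A := RInt G 0 (t/2)). set (B := RInt G (t/2) t). set (C := RInt G t (PI/2)).
  assert (HA : A <= (t/2) * G (t/2)).
  { unfold A. replace ((t/2) * G (t/2)) with (RInt (fun _ => G (t/2)) 0 (t/2)).
    2:{ rewrite RIntc; f_equal; field. }
    apply RInt_le. lra. apply exR; auto. apply exR; intros; apply continuous_const.
    intros x Hx. destruct (Rle_lt_or_eq_dec x (t/2)) as [h|h]; [lra| |].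
    apply Rlt_le, Gmono; lra. subst; lra. }
  assert (HB : B <= (t/2) * G t).
  { unfold B. replace ((t/2) * G t) with (RInt (fun _ => G t) (t/2) t).
    2:{ rewrite RIntc; f_equal; field. }
    apply RInt_le. lra. apply exR; auto. apply exR; intros; apply continuous_const.
    intros x Hx. apply Rlt_le, Gmono; lra. }
  assert (HC : (PI/2 - t) * G t <= C).
  { unfold C. replace ((PI/2 - t) * G t) with (RInt (fun _ => G t) t (PI/2)).
    2:{ rewrite RIntc; f_equal; field. }
    apply RInt_le. lra. apply exR; intros; apply continuous_const. apply exR; auto.
    intros x Hx. apply Rlt_le, Gmono; lra. }
  assert (Hlt : G (t/2) < G t) by (apply Gmono; lra).
  assert (G0 : 0 < G (t/2)) by (unfold G; assert (h1:=exp_pos (c * sin (t/2))); assert (h2:=exp_pos (- c * sin (t/2))); lra).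
  assert (HA0 : 0 <= A).
  { unfold A. apply Rle_trans with (RInt (fun _ => 0) 0 (t/2)).
    { rewrite RIntc, Rmult_0_r. apply Rle_refl. }
    apply RInt_le. lra. apply exR; intros; apply continuous_const. apply exR; auto.
    intros x Hx. unfold G. assert (h1:=exp_pos (c * sin x)); assert (h2:=exp_pos (- c * sin x)); lra. }
  assert (HB0 : 0 <= B).
  { unfold B. apply Rle_trans with (RInt (fun _ => 0) (t/2) t).
    { rewrite RIntc, Rmult_0_r. apply Rle_refl. }
    apply RInt_le. lra. apply exR; intros; apply continuous_const. apply exR; auto.
    intros x Hx. unfold G. assert (h1:=exp_pos (c * sin x)); assert (h2:=exp_pos (- c * sin x)); lra. }
  assert (K1 : (PI - 2*t) * (A + B) <= (PI - 2*t) * ((t/2) * (G (t/2) + G t))).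
  { apply Rmult_le_compat_l; lra. }
  assert (K2 : (PI - 2*t) * ((t/2) * (G (t/2) + G t)) < (PI - 2*t) * (t * G t)).
  { apply Rmult_lt_compat_l; [lra|]. apply (Rmult_lt_reg_l 2); [lra|].
    assert (0 < t * (G t - G (t/2))) by (apply Rmult_lt_0_compat; lra). lra. }
  assert (K3 : (PI - 2*t) * (t * G t) <= 2 * t * C).
  { assert (2 * t * ((PI/2 - t) * G t) <= 2 * t * C) by (apply Rmult_le_compat_l; lra).
    replace ((PI - 2*t) * (t * G t)) with (2 * t * ((PI/2 - t) * G t)) by field. exact H. }
  assert (Key : (PI - 2*t) * (A + B) < 2 * t * C) by lra.
  assert (HCpos : 0 < C) by (assert (0 < (PI/2 - t) * G t) by (apply Rmult_lt_0_compat; lra); lra).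
  change (plus (A + B) C) with (A + B + C).
  apply (Rmult_lt_reg_r (2 * (A + B + C) * PI)). nra.
  replace (2 * (A + B) / (2 * (A + B + C)) * (2 * (A + B + C) * PI)) with (2 * (A + B) * PI) by (field; lra).
  replace (2 * t / PI * (2 * (A + B + C) * PI)) with (2 * t * (2 * (A + B + C))) by (field; lra).
  assert (E : 2*t*(2*(A+B+C)) - 2*(A+B)*PI = 2*(2*t*C - (PI-2*t)*(A+B))) by ring. apply Rminus_gt_0_lt. rewrite E. apply Rmult_lt_0_compat; [lra|]. apply Rlt_Rminus. exact Key.
Qed.
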